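(* Let $a,b,c,d\in\mathbb{R}$, let $F(q_1,q_2)=aq_1^3+bq_1^2q_2+cq_1q_2^2+dq_2^3$, and let $L=\{(q,\nabla F(q)):q\in\mathbb{R}^2\}\subset\mathbb{R}^4$. Consider the map $\Psi:\mathbb{R}^2\times\mathbb{R}^2\to\mathbb{R}^4$, $\Psi(q,w)=(q+w,\nabla F(q)+\nabla^2F(q)w)$ (i.e. $\Psi(X,W)=X+W$ on $TL$), let $\Delta$ be its set of critical points and $\Sigma=\Psi(\Delta)$. The following are equivalent: (i) $18abcd+b^2c^2>4ac^3+4b^3d+27a^2d^2$; (ii) $\Delta$ equals the zero section $\{w=0\}$ (and then, in particular, $\Sigma=L$); (iii) every regular value of $\Psi$ has multiplicity $2$. Moreover, the opposite inequality $18abcd+b^2c^2<4ac^3+4b^3d+27a^2d^2$ is equivalent to the multiplicity of $\Psi$ (at regular values) being $0$ and $4$; in this case $\Delta$ is not equal to the zero section.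
   Context: $\mathbb{R}^4$ has coordinates $(q_1,q_2,p_1,p_2)$ and symplectic form $\sum_i dp_i\wedge dq_i$; $L$ is a Lagrangian submanifold, and $TL$ is identified with $\mathbb{R}^2\times\mathbb{R}^2$ via $(q,w)\mapsto$ the tangent vector $(w,\nabla^2F(q)w)$ at $(q,\nabla F(q))$, where $\nabla^2F(q)$ is the Hessian. The image of $\Psi$ is where the outer symplectic billiard correspondence of $L$ is defined. The multiplicity of a regular value is its number of preimages under $\Psi$. *)

(* Defs.v *)
From HB Require Import structures.
From mathcomp Require Import all_boot all_order all_algebra.
From mathcomp Require Import all_classical all_reals all_analysis.
Set Implicit Arguments. Unset Strict Implicit. Unset Printing Implicit Defensive.
Import Order.TTheory GRing.Theory Num.Theory.
Import numFieldNormedType.Exports.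
Local Open Scope classical_set_scope.
Local Open Scope ring_scope.

Section Defs.
Variable R : realType.

Definition i0 : 'I_4 := @Ordinal 4 0 isT.
Definition i1 : 'I_4 := @Ordinal 4 1 isT.
Definition i2 : 'I_4 := @Ordinal 4 2 isT.
Definition i3 : 'I_4 := @Ordinal 4 3 isT.

Definition vec4 (x1 x2 x3 x4 : R) : 'rV[R]_4 :=
  \row_(i < 4) nth 0 [:: x1; x2; x3; x4] i.

Definition cubicF (a b c d q1 q2 : R) : R :=
  a * q1 ^+ 3 + b * q1 ^+ 2 * q2 + c * q1 * q2 ^+ 2 + d * q2 ^+ 3.

Definition gradF1 (a b c d q1 q2 : R) : R :=
  3%:R * a * q1 ^+ 2 + 2%:R * b * q1 * q2 + c * q2 ^+ 2.
Definition gradF2 (a b c d q1 q2 : R) : R :=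
  b * q1 ^+ 2 + 2%:R * c * q1 * q2 + 3%:R * d * q2 ^+ 2.

Definition hessF11 (a b c d q1 q2 : R) : R := 6%:R * a * q1 + 2%:R * b * q2.
Definition hessF12 (a b c d q1 q2 : R) : R := 2%:R * b * q1 + 2%:R * c * q2.
Definition hessF22 (a b c d q1 q2 : R) : R := 2%:R * c * q1 + 6%:R * d * q2.

Definition lagL (a b c d : R) : set 'rV[R]_4 :=
  [set vec4 q1 q2 (gradF1 a b c d q1 q2) (gradF2 a b c d q1 q2) | q1 in setT & q2 in setT].

(* Psi(q, w) = (q + w, grad F(q) + Hess F(q) w);
   a point of R^2 x R^2 is encoded as (q1, q2, w1, w2) in R^4. *)
Definition Psi (a b c d : R) (x : 'rV[R]_4) : 'rV[R]_4 :=
  let q1 := x 0 i0 in let q2 := x 0 i1 in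
  let w1 := x 0 i2 in let w2 := x 0 i3 in
  vec4 (q1 + w1) (q2 + w2)
    (gradF1 a b c d q1 q2 + hessF11 a b c d q1 q2 * w1 + hessF12 a b c d q1 q2 * w2)
    (gradF2 a b c d q1 q2 + hessF12 a b c d q1 q2 * w1 + hessF22 a b c d q1 q2 * w2).

Definition jacobian (f : 'rV[R]_4 -> 'rV[R]_4) (x : 'rV[R]_4) : 'M[R]_4 :=
  \matrix_(i < 4, j < 4) ('D_(delta_mx 0 j) f x) 0 i.

Definition critical_point (f : 'rV[R]_4 -> 'rV[R]_4) (x : 'rV[R]_4) : Prop :=
  \det (jacobian f x) = 0.

Definition critical_set (f : 'rV[R]_4 -> 'rV[R]_4) : set 'rV[R]_4 :=
  [set x | critical_point f x].

(* y is a regular value of f: no preimage of y is a critical point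
   (values not attained are regular values, of multiplicity 0). *)
Definition regular_value (f : 'rV[R]_4 -> 'rV[R]_4) (y : 'rV[R]_4) : Prop :=
  forall x, f x = y -> ~ critical_point f x.

Definition has_multiplicity (f : 'rV[R]_4 -> 'rV[R]_4) (y : 'rV[R]_4) (n : nat) : Prop :=
  exists s : seq 'rV[R]_4, [/\ uniq s, size s = n & forall x, f x = y <-> x \in s].

Definition regular_multiplicities (f : 'rV[R]_4 -> 'rV[R]_4) : set nat :=
  [set n | exists y, regular_value f y /\ has_multiplicity f y n].

Definition zero_section : set 'rV[R]_4 := [set x | x 0 i2 = 0 /\ x 0 i3 = 0].

End Defs.

(* Main.v *)
Require Import Defs.
From HB Require Import structures.
From mathcomp Require Import all_boot all_order all_algebra.
From mathcomp Require Import all_classical all_reals all_analysis.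
From mathcomp Require Import ring lra.
Import Order.TTheory GRing.Theory Num.Theory.
Import numFieldNormedType.Exports.
Local Open Scope classical_set_scope.
Local Open Scope ring_scope.
Set Implicit Arguments. Unset Strict Implicit. Unset Printing Implicit Defensive.

Section Lines.
Variable R : realType.
Implicit Types (w : R * R).

Definition qf (m1 m2 m3 : R) w := m1 * w.1 ^+ 2 + m2 * w.1 * w.2 + m3 * w.2 ^+ 2.

Definition lineset (m1 m2 m3 N p1 p2 : R) : seq (R * R) :=
  let lam := qf m1 m2 m3 (p2, - p1) in
  let t := Num.sqrt (N / lam) in
  if 0 < lam then [:: (t * p2, - (t * p1)); (- (t * p2), t * p1)] else [::].

Lemma lineset_size m1 m2 m3 N p1 p2 :
  size (lineset m1 m2 m3 N p1 p2) = if 0 < qf m1 m2 m3 (p2, - p1) then 2%N else 0%N.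
Proof. by rewrite /lineset; case: ifP. Qed.

Lemma on_line (p1 p2 : R) (w : R * R) : (p1 != 0) || (p2 != 0) -> p1 * w.1 + p2 * w.2 = 0 ->
  exists mu, w = (mu * p2, - (mu * p1)).
Proof.
case: w => w1 w2 /= hp e.
have [p10|p10] := eqVneq p1 0.
  rewrite p10 eqxx /= in hp. exists (w1 / p2).
  have w20 : w2 = 0.
    move: e; rewrite p10 mul0r add0r => /eqP; rewrite mulf_eq0 (negbTE hp) /=.
    by move/eqP.
  rewrite w20 p10 mulr0 oppr0; congr (_, _); by field.
exists (- (w2 / p1)); congr (_, _); last by field.
have -> : w1 = (p1 * w1) / p1 by field.
have -> : p1 * w1 = - (p2 * w2) by apply/eqP; rewrite -addr_eq0 e.
by field.
Qed.

Lemma lineset_mem (m1 m2 m3 N p1 p2 : R) (w : R * R) : 0 < N -> (p1 != 0) || (p2 != 0) ->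
  (p1 * w.1 + p2 * w.2 = 0 /\ qf m1 m2 m3 w = N) <-> w \in lineset m1 m2 m3 N p1 p2.
Proof.
move=> N0 hp.
set lam := qf m1 m2 m3 (p2, - p1).
have qline : forall mu, qf m1 m2 m3 (mu * p2, - (mu * p1)) = mu ^+ 2 * lam.
  by move=> mu; rewrite /lam /qf /=; ring.
rewrite /lineset -/lam; split.
  case=> /(on_line hp) [mu ->]; rewrite qline => hN.
  have lam0 : 0 < lam.
    rewrite ltNge; apply/negP => hl.
    have : mu ^+ 2 * lam <= 0 by rewrite mulr_ge0_le0 // sqr_ge0.
    by rewrite hN leNgt N0.
  rewrite lam0 !inE.
  set t := Num.sqrt (N / lam).
  have t2 : t ^+ 2 = mu ^+ 2.
    by rewrite sqr_sqrtr ?divr_ge0 ?ltW // -hN mulfK // gt_eqF.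
  have : (mu - t) * (mu + t) = 0 by rewrite -subr_sqr t2 subrr.
  move/eqP; rewrite mulf_eq0 => /orP [/eqP h | /eqP h].
    have -> : mu = t by apply/eqP; rewrite -subr_eq0 h.
    by rewrite eqxx.
  have -> : mu = - t by apply/eqP; rewrite -addr_eq0 h.
  by rewrite !mulNr opprK eqxx orbT.
case: ifP => // lam0; rewrite !inE => /orP [] /eqP ->; split; rewrite /=.
- ring.
- rewrite qline sqr_sqrtr ?divr_ge0 ?ltW // divfK // gt_eqF //.
- ring.
- have -> : (- (Num.sqrt (N / lam) * p2), Num.sqrt (N / lam) * p1) =
            ((- Num.sqrt (N / lam)) * p2, - ((- Num.sqrt (N / lam)) * p1)).
    by rewrite !mulNr opprK.
  rewrite qline sqrrN sqr_sqrtr ?divr_ge0 ?ltW // divfK // gt_eqF //.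
Qed.

Lemma lineset_uniq (m1 m2 m3 N p1 p2 : R) : 0 < N -> (p1 != 0) || (p2 != 0) ->
  uniq (lineset m1 m2 m3 N p1 p2).
Proof.
move=> N0 hp; rewrite /lineset; case: ifP => // lam0 /=.
rewrite inE andbT; apply/negP => /eqP [] e1 e2.
set t := Num.sqrt _ in e1 e2.
have t0 : t != 0 by rewrite sqrtr_eq0 -ltNge divr_gt0.
move: hp => /orP [] /negP; apply.
  have h : t * p1 = 0 by lra.
  by move/eqP: h; rewrite mulf_eq0 (negbTE t0).
have h : t * p2 = 0 by lra.
by move/eqP: h; rewrite mulf_eq0 (negbTE t0).
Qed.

Lemma factor_qf (m1 m2 m3 : R) : 0 < m2 ^+ 2 - 4%:R * m1 * m3 ->
  exists p1 p2 r1 r2 : R, [/\ p1 * r2 - p2 * r1 != 0, m1 = p1 * r1,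
     m2 = p1 * r2 + p2 * r1 & m3 = p2 * r2].
Proof.
move=> hd.
have [m10|m10] := eqVneq m1 0.
  exists 0, 1, m2, m3; split; rewrite ?m10; try ring.
  rewrite mul0r sub0r mul1r oppr_eq0; apply/negP => /eqP m20.
  by move: hd; rewrite m10 m20; rewrite expr0n /= !(mulr0, mul0r) subrr ltxx.
set s := Num.sqrt (m2 ^+ 2 - 4%:R * m1 * m3).
have s2 : s ^+ 2 = m2 ^+ 2 - 4%:R * m1 * m3 by rewrite sqr_sqrtr // ltW.
have s0 : 0 < s by rewrite sqrtr_gt0.
exists (2%:R * m1), (m2 - s), (1 / 2%:R), ((m2 + s) / (4%:R * m1)); split.
- have -> : 2%:R * m1 * ((m2 + s) / (4%:R * m1)) - (m2 - s) * (1 / 2%:R) = s by field.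
  by rewrite gt_eqF.
- by field.
- by field.
- have -> : (m2 - s) * ((m2 + s) / (4%:R * m1)) = (m2 ^+ 2 - s ^+ 2) / (4%:R * m1) by field.
  rewrite s2; field; done.
Qed.

Lemma lines_count (m1 m2 m3 n1 n2 n3 N : R) : 0 < m2 ^+ 2 - 4%:R * m1 * m3 -> 0 < N ->
  exists s : seq (R * R), exists lam lam' : R,
  [/\ uniq s, lam * lam' = (m1 * n3 - m3 * n1) ^+ 2 - (m1 * n2 - m2 * n1) * (m2 * n3 - m3 * n2),
     size s = ((if (0 < lam)%R then 2 else 0) + (if (0 < lam')%R then 2 else 0))%N &
     forall w, (qf m1 m2 m3 w = 0 /\ qf n1 n2 n3 w = N) <-> w \in s].
Proof.
move=> hd N0; have [p1 [p2 [r1 [r2 [det e1 e2 e3]]]]] := factor_qf hd.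
have hp : (p1 != 0) || (p2 != 0).
  rewrite -negb_and; apply/negP => /andP [/eqP h1 /eqP h2]; move: det.
  by rewrite h1 h2 !mul0r subrr eqxx.
have hr : (r1 != 0) || (r2 != 0).
  rewrite -negb_and; apply/negP => /andP [/eqP h1 /eqP h2]; move: det.
  by rewrite h1 h2 !mulr0 subrr eqxx.
have fac : forall w, qf m1 m2 m3 w = (p1 * w.1 + p2 * w.2) * (r1 * w.1 + r2 * w.2).
  by move=> w; rewrite /qf e1 e2 e3; ring.
exists (lineset n1 n2 n3 N p1 p2 ++ lineset n1 n2 n3 N r1 r2).
exists (qf n1 n2 n3 (p2, - p1)), (qf n1 n2 n3 (r2, - r1)); split.
- rewrite cat_uniq !lineset_uniq //= andbT.
  apply/hasPn => w /(lineset_mem _ _ _ _ N0 hr) [hw2 hN].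
  apply/negP => /(lineset_mem _ _ _ _ N0 hp) [hw1 _].
  have w1 : w.1 = 0.
    have : w.1 * (p1 * r2 - p2 * r1) = 0.
      have -> : w.1 * (p1 * r2 - p2 * r1) = r2 * (p1 * w.1 + p2 * w.2) - p2 * (r1 * w.1 + r2 * w.2) by ring.
      by rewrite hw1 hw2 !mulr0 subrr.
    by move/eqP; rewrite mulf_eq0 (negbTE det) orbF => /eqP.
  have w2 : w.2 = 0.
    have : w.2 * (p1 * r2 - p2 * r1) = 0.
      have -> : w.2 * (p1 * r2 - p2 * r1) = p1 * (r1 * w.1 + r2 * w.2) - r1 * (p1 * w.1 + p2 * w.2) by ring.
      by rewrite hw1 hw2 !mulr0 subrr.
    by move/eqP; rewrite mulf_eq0 (negbTE det) orbF => /eqP.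
  by move: hN; rewrite /qf w1 w2 expr0n /= !(mulr0, mul0r, addr0) => hN; move: N0; rewrite -hN ltxx.
- by rewrite /qf e1 e2 e3 /=; ring.
- by rewrite size_cat !lineset_size.
- move=> w; rewrite mem_cat fac; split.
    case=> /eqP; rewrite mulf_eq0 => /orP [] /eqP h hN.
      by apply/orP; left; apply/(lineset_mem _ _ _ _ N0 hp).
    by apply/orP; right; apply/(lineset_mem _ _ _ _ N0 hr).
  move=> /orP [] /(lineset_mem _ _ _ _ N0) => [/(_ hp)|/(_ hr)] [h hN];
    by rewrite h ?mul0r ?mulr0.
Qed.
End Lines.

Section S.
Variable R : realType.
Lemma det4 (A : 'M[R]_4) : \det A = A i0 i0 * A i1 i1 * A i2 i2 * A i3 i3 - A i0 i0 * A i1 i1 * A i2 i3 * A i3 i2 - A i0 i0 * A i1 i2 * A i2 i1 * A i3 i3 + A i0 i0 * A i1 i2 * A i2 i3 * A i3 i1 + A i0 i0 * A i1 i3 * A i2 i1 * A i3 i2 - A i0 i0 * A i1 i3 * A i2 i2 * A i3 i1 - A i0 i1 * A i1 i0 * A i2 i2 * A i3 i3 + A i0 i1 * A i1 i0 * A i2 i3 * A i3 i2 + A i0 i1 * A i1 i2 * A i2 i0 * A i3 i3 - A i0 i1 * A i1 i2 * A i2 i3 * A i3 i0 - A i0 i1 * A i1 i3 * A i2 i0 * A i3 i2 + A i0 i1 * A i1 i3 * A i2 i2 * A i3 i0 + A i0 i2 * A i1 i0 * A i2 i1 * A i3 i3 - A i0 i2 * A i1 i0 * A i2 i3 * A i3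 i1 - A i0 i2 * A i1 i1 * A i2 i0 * A i3 i3 + A i0 i2 * A i1 i1 * A i2 i3 * A i3 i0 + A i0 i2 * A i1 i3 * A i2 i0 * A i3 i1 - A i0 i2 * A i1 i3 * A i2 i1 * A i3 i0 - A i0 i3 * A i1 i0 * A i2 i1 * A i3 i2 + A i0 i3 * A i1 i0 * A i2 i2 * A i3 i1 + A i0 i3 * A i1 i1 * A i2 i0 * A i3 i2 - A i0 i3 * A i1 i1 * A i2 i2 * A i3 i0 - A i0 i3 * A i1 i2 * A i2 i0 * A i3 i1 + A i0 i3 * A i1 i2 * A i2 i1 * A i3 i0.
Proof.
pose g (k l : nat) := A (nth i0 [:: i0; i1; i2; i3] k) (nth i0 [:: i0; i1; i2; i3] l).
have E : forall k l : 'I_4, A k l = g k l.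
  move=> k l; rewrite /g; congr (A _ _); apply/val_inj;
  by [case: k => [[|[|[|[|?]]]] ?] | case: l => [[|[|[|[|?]]]] ?]].
do 3 (rewrite !(expand_det_row _ ord0) !big_ord_recl !big_ord0 /cofactor).
rewrite !det_mx11 !mxE !E /=.
rewrite /g /=.
rewrite /bump /=. rewrite !expr0 !expr1 !exprS !expr0. ring.
Qed.


Lemma derive_quad (f : 'rV[R]_4 -> 'rV[R]_4) x v A B :
  (forall h : R, f (h *: v + x) = f x + h *: A + (h ^+ 2) *: B) -> 'D_v f x = A.
Proof.
move=> hf; rewrite /derive.
apply: cvg_lim => //.
have e : {near 0^', (fun h : R => A + h *: B) =1 (fun h => h^-1 *: ((f \o shift x) (h *: v) - f x))}.
  near=> h.
  rewrite /= /shift hf.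
  have h0 : h != 0 by near: h; exact: nbhs_dnbhs_neq.
  by apply/rowP => i; rewrite !mxE; field.
apply: cvg_trans (near_eq_cvg e) _.
have H : (fun h : R => A + h *: B) @ (0:R) --> A + (0:R) *: B.
  apply: cvgD; first exact: cvg_cst.
  apply: cvgZl; exact: cvg_id.
rewrite scale0r addr0 in H.
exact: cvg_within_filter H.
Unshelve. all: by end_near. Qed.

Variables a b c d : R.
Definition dPsi (x v : 'rV[R]_4) : 'rV[R]_4 :=
  let q1 := x 0 i0 in let q2 := x 0 i1 in
  let w1 := x 0 i2 in let w2 := x 0 i3 in
  let e1 := v 0 i0 in let e2 := v 0 i1 in
  let f1 := v 0 i2 in let f2 := v 0 i3 in
  vec4 (e1 + f1) (e2 + f2)
   (hessF11 a b c d q1 q2 * e1 + hessF12 a b c d q1 q2 * e2 + hessF11 a b c d e1 e2 * w1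
     + hessF12 a b c d e1 e2 * w2 + hessF11 a b c d q1 q2 * f1 + hessF12 a b c d q1 q2 * f2)
   (hessF12 a b c d q1 q2 * e1 + hessF22 a b c d q1 q2 * e2 + hessF12 a b c d e1 e2 * w1
     + hessF22 a b c d e1 e2 * w2 + hessF12 a b c d q1 q2 * f1 + hessF22 a b c d q1 q2 * f2).
Definition BPsi (v : 'rV[R]_4) : 'rV[R]_4 :=
  let e1 := v 0 i0 in let e2 := v 0 i1 in
  let f1 := v 0 i2 in let f2 := v 0 i3 in
  vec4 0 0
   (gradF1 a b c d e1 e2 + hessF11 a b c d e1 e2 * f1 + hessF12 a b c d e1 e2 * f2)
   (gradF2 a b c d e1 e2 + hessF12 a b c d e1 e2 * f1 + hessF22 a b c d e1 e2 * f2).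

Lemma Psi_expand x v h :
  Psi a b c d (h *: v + x) = Psi a b c d x + h *: dPsi x v + h ^+ 2 *: BPsi v.
Proof.
apply/rowP => i; rewrite !mxE.
case: i => [[|[|[|[|//]]]] Hi] /=; rewrite ?mxE /= /gradF1 /gradF2 /hessF11 /hessF12 /hessF22; ring.
Qed.

Lemma jac_det x : \det (Defs.jacobian (Psi a b c d) x) =
  hessF11 a b c d (x 0 i2) (x 0 i3) * hessF22 a b c d (x 0 i2) (x 0 i3)
  - hessF12 a b c d (x 0 i2) (x 0 i3) ^+ 2.
Proof.
have D : forall v, derive (Psi a b c d) x v = dPsi x v.
  by move=> v; apply: (@derive_quad _ _ _ _ (BPsi v)) => h; exact: Psi_expand.
rewrite det4 /Defs.jacobian !mxE !D /dPsi. rewrite !mxE /=.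
rewrite /hessF11 /hessF12 /hessF22.
ring.
Qed.
End S.

Section Alg.
Variable R : realType.
Variables a b c d : R.
Definition al := 3%:R * a * c - b ^+ 2.
Definition be := 9%:R * a * d - b * c.
Definition ga := 3%:R * b * d - c ^+ 2.
Definition Dl := (18%:R * a * b * c * d + b ^+ 2 * c ^+ 2) -
  (4%:R * a * c ^+ 3 + 4%:R * b ^+ 3 * d + 27%:R * a ^+ 2 * d ^+ 2).
Definition Qf (w : R * R) := al * w.1 ^+ 2 + be * w.1 * w.2 + ga * w.2 ^+ 2.
Definition G1 (w : R * R) := gradF1 a b c d w.1 w.2.
Definition G2 (w : R * R) := gradF2 a b c d w.1 w.2.
Definition k1 (v : R * R) := 3%:R * a * v.2 - b * v.1.
Definition k2 (v : R * R) := 2%:R * (b * v.2 - c * v.1).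
Definition k3 (v : R * R) := c * v.2 - 3%:R * d * v.1.
Definition l1 (v : R * R) := 3%:R * a * v.1 + b * v.2.
Definition l2 (v : R * R) := 2%:R * (b * v.1 + c * v.2).
Definition l3 (v : R * R) := c * v.1 + 3%:R * d * v.2.
Definition dk v := k2 v ^+ 2 - 4%:R * k1 v * k3 v.
Definition Res v := (k1 v * l3 v - k3 v * l1 v) ^+ 2 - (k1 v * l2 v - k2 v * l1 v) * (k2 v * l3 v - k3 v * l2 v).

Lemma I2 v : dk v = - 4%:R * Qf (- v.2, v.1).
Proof. rewrite /dk /Qf /k1 /k2 /k3 /al /be /ga /=. ring. Qed.
Lemma I3 w : dk (G1 w, G2 w) = 4%:R * Qf w ^+ 2.
Proof. rewrite /dk /Qf /k1 /k2 /k3 /al /be /ga /G1 /G2 /gradF1 /gradF2 /=. ring. Qed.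
Lemma I4 v : Res v = - 3%:R * Dl * (v.1 ^+ 2 + v.2 ^+ 2) ^+ 2.
Proof. rewrite /Res /Dl /k1 /k2 /k3 /l1 /l2 /l3 /=. ring. Qed.
Lemma I5 w : hessF11 a b c d w.1 w.2 * hessF22 a b c d w.1 w.2 - hessF12 a b c d w.1 w.2 ^+ 2 = 4%:R * Qf w.
Proof. rewrite /Qf /hessF11 /hessF12 /hessF22 /al /be /ga. ring. Qed.
Lemma I6 : be ^+ 2 - 4%:R * al * ga = - 3%:R * Dl.
Proof. rewrite /Dl /al /be /ga. ring. Qed.
Lemma I7 : 27%:R * a ^+ 2 * Dl = - 4%:R * al ^+ 3 - (2%:R * b ^+ 3 - 9%:R * a * b * c + 27%:R * a ^+ 2 * d) ^+ 2.
Proof. rewrite /Dl /al. ring. Qed.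
Lemma I8a : G1 (be, - 2%:R * al) = - 9%:R * a * Dl /\ G2 (be, - 2%:R * al) = - 3%:R * b * Dl.
Proof. rewrite /G1 /G2 /gradF1 /gradF2 /Dl /al /be /=; split; ring. Qed.
Lemma I8b : G1 (2%:R * ga, - be) = - 3%:R * c * Dl /\ G2 (2%:R * ga, - be) = - 9%:R * d * Dl.
Proof. rewrite /G1 /G2 /gradF1 /gradF2 /Dl /ga /be /=; split; ring. Qed.
End Alg.

Section PsiSec.
Variable R : realType.
Variables a b c d : R.

Lemma vec4E (x1 x2 x3 x4 : R) :
  [/\ vec4 x1 x2 x3 x4 0 i0 = x1, vec4 x1 x2 x3 x4 0 i1 = x2,
      vec4 x1 x2 x3 x4 0 i2 = x3 & vec4 x1 x2 x3 x4 0 i3 = x4].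
Proof. by rewrite !mxE. Qed.

Lemma rowE4 (x : 'rV[R]_4) : x = vec4 (x 0 i0) (x 0 i1) (x 0 i2) (x 0 i3).
Proof.
apply/rowP => i; rewrite mxE.
by case: i => [[|[|[|[|//]]]] Hi] /=; congr (x 0 _); apply/val_inj.
Qed.

Lemma vec4_eq (x1 x2 x3 x4 y1 y2 y3 y4 : R) :
  vec4 x1 x2 x3 x4 = vec4 y1 y2 y3 y4 <-> [/\ x1 = y1, x2 = y2, x3 = y3 & x4 = y4].
Proof.
split; last by case=> -> -> -> ->.
move=> e; have h := fun i => congr1 (fun z : 'rV[R]_4 => z 0 i) e.
by split; [move: (h i0)|move: (h i1)|move: (h i2)|move: (h i3)]; rewrite !mxE.
Qed.

Definition emb (y : 'rV[R]_4) (w : R * R) : 'rV[R]_4 :=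
  vec4 (y 0 i0 - w.1) (y 0 i1 - w.2) w.1 w.2.
Definition vv (y : 'rV[R]_4) : R * R :=
  (gradF1 a b c d (y 0 i0) (y 0 i1) - y 0 i2, gradF2 a b c d (y 0 i0) (y 0 i1) - y 0 i3).
Definition Gw (w : R * R) : R * R := (G1 a b c d w, G2 a b c d w).

Lemma emb_inj y : injective (emb y).
Proof.
move=> [w1 w2] [z1 z2] /vec4_eq [_ _ /= -> ->] //.
Qed.

Lemma Psi_pre x y : Psi a b c d x = y <-> exists w, x = emb y w /\ Gw w = vv y.
Proof.
split.
  move=> <-; exists (x 0 i2, x 0 i3); split.
    rewrite {1}(rowE4 x) /emb /Psi; apply/vec4_eq; rewrite !mxE /=; split; ring.
  rewrite /Gw /vv /Psi /G1 /G2 !mxE /= /gradF1 /gradF2 /hessF11 /hessF12 /hessF22.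
  congr (_, _); ring.
move=> [w [-> e]]; move: e; rewrite /Gw /vv /G1 /G2 => -[e1 e2].
rewrite (rowE4 y) /emb /Psi; apply/vec4_eq; rewrite !mxE /=; split; try ring.
- have -> : y 0 i2 = gradF1 a b c d (y 0 i0) (y 0 i1) - gradF1 a b c d w.1 w.2 by rewrite e1; ring.
  rewrite /gradF1 /hessF11 /hessF12; ring.
- have -> : y 0 i3 = gradF2 a b c d (y 0 i0) (y 0 i1) - gradF2 a b c d w.1 w.2 by rewrite e2; ring.
  rewrite /gradF2 /hessF22 /hessF12; ring.
Qed.

Lemma crit_iff x : critical_point (Psi a b c d) x <-> Qf a b c d (x 0 i2, x 0 i3) = 0.
Proof.
rewrite /critical_point jac_det.
have := I5 a b c d (x 0 i2, x 0 i3); rewrite /= => ->.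
split; first by move/eqP; rewrite mulf_eq0 pnatr_eq0 /= => /eqP.
by move->; rewrite mulr0.
Qed.

Lemma crit_emb y w : critical_point (Psi a b c d) (emb y w) <-> Qf a b c d w = 0.
Proof. by rewrite crit_iff /emb !mxE /=; case: w. Qed.

Lemma regular_iff y : regular_value (Psi a b c d) y <-> forall w, Gw w = vv y -> Qf a b c d w != 0.
Proof.
split.
  move=> hr w e; apply/eqP => q0; apply: (hr (emb y w)).
    by apply/Psi_pre; exists w.
  by apply/crit_emb.
move=> h x /Psi_pre [w [-> e]] /crit_emb q0.
by move: (h w e); rewrite q0 eqxx.
Qed.

Lemma transfer y (s : seq (R * R)) : uniq s -> (forall w, Gw w = vv y <-> w \in s) ->
  has_multiplicity (Psi a b c d) y (size s) /\
  forall n, has_multiplicity (Psi a b c d) y n -> n = size s.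
Proof.
move=> us hs.
have mem : forall x, Psi a b c d x = y <-> x \in map (emb y) s.
  move=> x; split.
    by move/Psi_pre => [w [-> /hs e]]; rewrite mem_map //; exact: emb_inj.
  case/mapP => w /hs e ->; apply/Psi_pre; exists w; split => //.
split.
  exists (map (emb y) s); split => //; last by rewrite size_map.
  by rewrite map_inj_uniq //; exact: emb_inj.
move=> n [t [ut st ht]].
rewrite -st -(size_map (emb y) s); apply: perm_size; apply: uniq_perm => //.
  by rewrite map_inj_uniq //; exact: emb_inj.
by move=> x; apply/idP/idP => h; [apply/mem/ht | apply/ht/mem].
Qed.


Local Notation Q := (Qf a b c d).
Local Notation DL := (Dl a b c d).
Local Notation dkv := (dk a b c d).

Lemma qfk v w : qf (k1 a b v) (k2 b c v) (k3 c d v) w = v.2 * G1 a b c d w - v.1 * G2 a b c d w.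
Proof. by rewrite /qf /k1 /k2 /k3 /G1 /G2 /gradF1 /gradF2; ring. Qed.
Lemma qfl v w : qf (l1 a b v) (l2 b c v) (l3 c d v) w = v.1 * G1 a b c d w + v.2 * G2 a b c d w.
Proof. by rewrite /qf /l1 /l2 /l3 /G1 /G2 /gradF1 /gradF2; ring. Qed.

Lemma sol_iff v w : 0 < v.1 ^+ 2 + v.2 ^+ 2 ->
  Gw w = v <-> (qf (k1 a b v) (k2 b c v) (k3 c d v) w = 0 /\
                qf (l1 a b v) (l2 b c v) (l3 c d v) w = v.1 ^+ 2 + v.2 ^+ 2).
Proof.
move=> N0; rewrite qfk qfl; split.
  by case: v N0 => v1 v2 N0 [<- <-] /=; split; ring.
case=> hk hl; have Nn : v.1 ^+ 2 + v.2 ^+ 2 != 0 by rewrite gt_eqF.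
case: v N0 Nn hk hl => v1 v2 /= N0 Nn hk hl; rewrite /Gw; congr (_, _).
  apply: (mulIf Nn).
  have -> : G1 a b c d w * (v1 ^+ 2 + v2 ^+ 2) =
    v1 * (v1 * G1 a b c d w + v2 * G2 a b c d w) + v2 * (v2 * G1 a b c d w - v1 * G2 a b c d w) by ring.
  by rewrite hl hk; ring.
apply: (mulIf Nn).
have -> : G2 a b c d w * (v1 ^+ 2 + v2 ^+ 2) =
  v2 * (v1 * G1 a b c d w + v2 * G2 a b c d w) - v1 * (v2 * G1 a b c d w - v1 * G2 a b c d w) by ring.
by rewrite hl hk; ring.
Qed.

Lemma dk0 : dkv (0, 0) = 0.
Proof. by rewrite /dk /k1 /k2 /k3 /=; ring. Qed.

Lemma N_pos v : 0 < dkv v -> 0 < v.1 ^+ 2 + v.2 ^+ 2.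
Proof.
move=> hd; rewrite lt_def addr_ge0 ?sqr_ge0 // andbT.
apply/negP; rewrite paddr_eq0 ?sqr_ge0 // !sqrf_eq0 => /andP [/eqP h1 /eqP h2].
by move: hd; case: v h1 h2 => v1 v2 /= -> ->; rewrite dk0 ltxx.
Qed.

Lemma MC v : 0 < dkv v -> exists s : seq (R * R), exists lam lam' : R,
  [/\ uniq s, lam * lam' = - 3%:R * DL * (v.1 ^+ 2 + v.2 ^+ 2) ^+ 2,
     size s = ((if (0 < lam)%R then 2 else 0) + (if (0 < lam')%R then 2 else 0))%N &
     forall w, Gw w = v <-> w \in s].
Proof.
move=> hd; have N0 := N_pos hd.
have [s [lam [lam' [us hp hs hm]]]] := lines_count (l1 a b v) (l2 b c v) (l3 c d v) hd N0.
exists s, lam, lam'; split => //.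
  by rewrite hp -I4.
by move=> w; rewrite (sol_iff _ N0); exact: hm.
Qed.

Lemma nlt (x : R) : (0 < x) = false -> x <= 0.
Proof. by move/negbT; rewrite -leNgt. Qed.

Lemma size_neg (lam lam' : R) (n : nat) : lam * lam' < 0 ->
  n = ((if (0 < lam)%R then 2 else 0) + (if (0 < lam')%R then 2 else 0))%N -> n = 2%N.
Proof.
move=> hp ->; case: ifP => h1; case: ifP => h2 //; exfalso.
- nra.
- move: (nlt h1) (nlt h2) => h3 h4; nra.
Qed.

Lemma size_pos (lam lam' : R) (n : nat) : 0 < lam * lam' -> (0 < n)%N ->
  n = ((if (0 < lam)%R then 2 else 0) + (if (0 < lam')%R then 2 else 0))%N -> n = 4%N.
Proof.
move=> hp hn e; move: hn; rewrite e; case: ifP => h1; case: ifP => h2 //; exfalso.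
- move: (nlt h2) => h4; nra.
- move: (nlt h1) => h3; nra.
Qed.

Lemma size_le (lam lam' : R) (n : nat) : lam * lam' <= 0 ->
  n = ((if (0 < lam)%R then 2 else 0) + (if (0 < lam')%R then 2 else 0))%N -> (n <= 2)%N.
Proof.
move=> hp ->; case: ifP => h1; case: ifP => h2 //; exfalso; nra.
Qed.

Local Notation AL := (al a b c).
Local Notation BE := (be a b c d).
Local Notation GA := (ga b c d).

Lemma Q4 w : 4%:R * AL * Q w = (2%:R * AL * w.1 + BE * w.2) ^+ 2 - (BE ^+ 2 - 4%:R * AL * GA) * w.2 ^+ 2.
Proof. by rewrite /Qf; ring. Qed.

Lemma al_neg : 0 < DL -> AL < 0.
Proof.
move=> hD; have h6 := I6 a b c d.
have [a0|a0] := eqVneq a 0.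
  have e : AL = - b ^+ 2 by rewrite /al a0; ring.
  have [b0|b0] := eqVneq b 0.
    have al0 : AL = 0 by rewrite e b0 expr0n /= oppr0.
    move: h6; rewrite al0 mulr0 mul0r subr0 => h6.
    have : 0 <= BE ^+ 2 by rewrite sqr_ge0.
    lra.
  by rewrite e oppr_lt0 exprn_even_gt0.
have h7 := I7 a b c d.
have ha : 0 < a ^+ 2 * DL by rewrite mulr_gt0 // exprn_even_gt0.
rewrite ltNge; apply/negP => hal.
have h3 : 0 <= AL ^+ 3 by rewrite exprn_ge0.
set e := (2%:R * b ^+ 3 - 9%:R * a * b * c + 27%:R * a ^+ 2 * d) in h7.
have he : 0 <= e ^+ 2 by rewrite sqr_ge0.
have : 27%:R * a ^+ 2 * DL = 27%:R * (a ^+ 2 * DL) by ring.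
lra.
Qed.

Lemma Qneg : 0 < DL -> forall w, (w.1 != 0) || (w.2 != 0) -> Q w < 0.
Proof.
move=> hD w hw; have hal := al_neg hD; have h4 := Q4 w; rewrite I6 in h4.
have pos : 0 < (2%:R * AL * w.1 + BE * w.2) ^+ 2 - - 3%:R * DL * w.2 ^+ 2.
  have [w20|w20] := eqVneq w.2 0.
    rewrite w20 eqxx orbF in hw; rewrite w20 expr0n /= !mulr0 !addr0 subr0.
    have : 0 < w.1 ^+ 2 by rewrite exprn_even_gt0.
    have : 0 < AL ^+ 2 by rewrite exprn_even_gt0 // (lt_eqF hal).
    nra.
  have : 0 < w.2 ^+ 2 by rewrite exprn_even_gt0.
  have : 0 <= (2%:R * AL * w.1 + BE * w.2) ^+ 2 by rewrite sqr_ge0.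
  nra.
nra.
Qed.

Lemma Qdef : (forall w, Q w = 0 -> w = (0, 0)) <-> 0 < DL.
Proof.
split; last first.
  move=> hD [w1 w2] e; apply/eqP; rewrite xpair_eqE; apply/negP => /negP.
  by rewrite negb_and => hw; move: (@Qneg hD (w1, w2) hw); rewrite e ltxx.
move=> h; rewrite ltNge; apply/negP => hD.
have [al0|al0] := eqVneq AL 0.
  have : Q (1, 0) = 0 by rewrite /Qf al0 /=; ring.
  by move/h => [] /eqP; rewrite oner_eq0.
set s := Num.sqrt (BE ^+ 2 - 4%:R * AL * GA).
have s2 : s ^+ 2 = BE ^+ 2 - 4%:R * AL * GA.
  by rewrite sqr_sqrtr // I6; nra.
have : Q ((s - BE) / (2%:R * AL), 1) = 0.
  apply: (mulfI (_ : 4%:R * AL != 0)); first by rewrite mulf_neq0 // pnatr_eq0.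
  rewrite mulr0 Q4 /= -s2.
  have -> : 2%:R * AL * ((s - BE) / (2%:R * AL)) + BE * 1 = s by field.
  ring.
by move/h => [] _ /eqP; rewrite oner_eq0.
Qed.

Lemma qf_def0 (m1 m2 m3 : R) w : m2 ^+ 2 - 4%:R * m1 * m3 < 0 -> qf m1 m2 m3 w = 0 -> w = (0, 0).
Proof.
move=> hd e.
have m10 : m1 != 0.
  apply/negP => /eqP m10; move: hd; rewrite m10 mulr0 mul0r subr0 ltNge sqr_ge0 //.
have h : 4%:R * m1 * qf m1 m2 m3 w = (2%:R * m1 * w.1 + m2 * w.2) ^+ 2 - (m2 ^+ 2 - 4%:R * m1 * m3) * w.2 ^+ 2.
  by rewrite /qf; ring.
rewrite e mulr0 in h.
have s1 : 0 <= (2%:R * m1 * w.1 + m2 * w.2) ^+ 2 by rewrite sqr_ge0.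
have s2 : 0 <= w.2 ^+ 2 by rewrite sqr_ge0.
have w20 : w.2 ^+ 2 = 0 by nra.
move: w20 => /eqP; rewrite sqrf_eq0 => /eqP w20.
rewrite w20 mulr0 addr0 in h.
have : (2%:R * m1 * w.1) ^+ 2 = 0 by rewrite -[LHS]subr0; nra.
move/eqP; rewrite sqrf_eq0 !mulf_eq0 pnatr_eq0 (negbTE m10) /= => /eqP w10.
by rewrite [w]surjective_pairing w10 w20.
Qed.

Lemma Gw0 : Gw (0, 0) = (0, 0).
Proof. by rewrite /Gw /G1 /G2 /gradF1 /gradF2 /=; congr (_, _); ring. Qed.

Lemma nosol_dk v : dkv v < 0 -> forall w, Gw w != v.
Proof.
move=> hd w; apply/negP => /eqP e.
have hk : qf (k1 a b v) (k2 b c v) (k3 c d v) w = 0.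
  by rewrite qfk; case: v e hd => v1 v2 [<- <-] _ /=; ring.
have := qf_def0 hd hk => w0.
by move: hd; rewrite -e w0 Gw0 dk0 ltxx.
Qed.

Lemma Qpos : DL < 0 -> exists w, 0 < Q w.
Proof.
move=> hD; have h6 := I6 a b c d.
have [al0|al0|al0] := ltgtP AL 0; last first.
- have bn : BE != 0.
    apply/negP => /eqP b0; move: h6; rewrite b0 al0 expr0n /= !mulr0 !mul0r subr0 => h6.
    lra.
  exists ((1 - GA) / BE, 1); rewrite /Qf al0 /=.
  have -> : 0 * ((1 - GA) / BE) ^+ 2 + BE * ((1 - GA) / BE) * 1 + GA * 1 ^+ 2 = 1 by field.
  exact: ltr01.
- by exists (1, 0); rewrite /Qf /=; lra.
- exists (- BE / (2%:R * AL), 1).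
  have h4 := Q4 (- BE / (2%:R * AL), 1).
  have e : 2%:R * AL * (- BE / (2%:R * AL)) + BE * 1 = 0.
    have aln : AL != 0 by rewrite (lt_eqF al0).
    by field.
  move: h4; rewrite /= e h6 expr0n /= expr1n mulr1 sub0r => h4.
  nra.
Qed.

Lemma mky_vv v : vv (vec4 0 0 (- v.1) (- v.2)) = v.
Proof. by rewrite /vv !mxE /= /gradF1 /gradF2; case: v => v1 v2 /=; congr (_, _); ring. Qed.

Lemma qf_semidef (m1 r m3 : R) : m1 * m3 - r ^+ 2 = 0 ->
  (forall w, 0 <= qf m1 (2%:R * r) m3 w) \/ (forall w, qf m1 (2%:R * r) m3 w <= 0).
Proof.
move=> e.
have h : forall w, m1 * qf m1 (2%:R * r) m3 w = (m1 * w.1 + r * w.2) ^+ 2.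
  move=> w.
  have -> : m1 * qf m1 (2%:R * r) m3 w = (m1 * w.1 + r * w.2) ^+ 2 + (m1 * m3 - r ^+ 2) * w.2 ^+ 2.
    by rewrite /qf; ring.
  by rewrite e mul0r addr0.
have [m0|m0|m0] := ltgtP m1 0.
- right => w; have := h w; have := sqr_ge0 (m1 * w.1 + r * w.2); nra.
- left => w; have := h w; have := sqr_ge0 (m1 * w.1 + r * w.2); nra.
- have r0 : r = 0.
    by move/eqP: e; rewrite m0 mul0r sub0r oppr_eq0 sqrf_eq0 => /eqP.
  have q : forall w, qf m1 (2%:R * r) m3 w = m3 * w.2 ^+ 2.
    by move=> w; rewrite /qf m0 r0; ring.
  have [m3p|m3n] := leP 0 m3.
    by left => w; rewrite q mulr_ge0 // sqr_ge0.
  by right => w; rewrite q; have := sqr_ge0 w.2; nra.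
Qed.

Lemma exists_u : DL = 0 -> exists u, ((u.1 != 0) || (u.2 != 0)) /\ Gw u = (0, 0).
Proof.
move=> hD.
have [al0|al0] := eqVneq AL 0; last first.
  exists (BE, - 2%:R * AL); split.
    by rewrite /= mulf_neq0 ?orbT // oppr_eq0 pnatr_eq0.
  by have [e1 e2] := I8a a b c d; rewrite /Gw e1 e2 hD !mulr0.
have [ga0|ga0] := eqVneq GA 0; last first.
  exists (2%:R * GA, - BE); split.
    by rewrite /= mulf_neq0 // pnatr_eq0.
  by have [e1 e2] := I8b a b c d; rewrite /Gw e1 e2 hD !mulr0.
have be0 : BE = 0.
  have h6 := I6 a b c d; move: h6; rewrite al0 ga0 hD !mulr0 subr0 => /eqP.
  by rewrite sqrf_eq0 => /eqP.
have [a0|a0] := eqVneq a 0; last first.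
  exists (- b, 3%:R * a); split.
    by rewrite /= mulf_neq0 ?orbT // pnatr_eq0.
  rewrite /Gw /G1 /G2 /gradF1 /gradF2 /=.
  have -> : 3%:R * a * (- b) ^+ 2 + 2%:R * b * - b * (3%:R * a) + c * (3%:R * a) ^+ 2 = 3%:R * a * AL.
    by rewrite /al; ring.
  have -> : b * (- b) ^+ 2 + 2%:R * c * - b * (3%:R * a) + 3%:R * d * (3%:R * a) ^+ 2 = 3%:R * a * BE - b * AL.
    by rewrite /al /be; ring.
  by rewrite al0 be0 !mulr0 subr0.
have b0 : b = 0.
  by move: al0; rewrite /al a0 mulr0 mul0r sub0r => /eqP; rewrite oppr_eq0 sqrf_eq0 => /eqP.
exists (1, 0); split; first by rewrite /= oner_eq0.
rewrite /Gw /G1 /G2 /gradF1 /gradF2 /= a0 b0; congr (_, _); ring.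
Qed.

Lemma nosol_Dl0 : DL = 0 -> exists v, forall w, Gw w != v.
Proof.
move=> hD; have [u [hu hG]] := exists_u hD.
have Qu : Q u = 0.
  have := I3 a b c d u; rewrite -/(Gw u) hG dk0 => /eqP; rewrite eq_sym mulf_eq0 pnatr_eq0 /=.
  by rewrite sqrf_eq0 => /eqP.
set p := 3%:R * a * u.1 + b * u.2.
set r := b * u.1 + c * u.2.
set t := c * u.1 + 3%:R * d * u.2.
have phi : forall w, u.1 * G1 a b c d w + u.2 * G2 a b c d w = qf p (2%:R * r) t w.
  by move=> w; rewrite /qf /p /r /t /G1 /G2 /gradF1 /gradF2; ring.
have det : p * t - r ^+ 2 = 0.
  by rewrite -Qu /p /t /r /Qf /al /be /ga; ring.
have uu : 0 < u.1 ^+ 2 + u.2 ^+ 2.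
  case/orP: hu => hu.
    by apply: ltr_pwDl; rewrite ?sqr_ge0 // exprn_even_gt0.
  by apply: ltr_pwDr; rewrite ?sqr_ge0 // exprn_even_gt0.
case: (qf_semidef det) => hs.
  exists (- u.1, - u.2) => w; apply/negP => /eqP e.
  have := hs w; rewrite -phi.
  have -> : G1 a b c d w = - u.1 by move: e; rewrite /Gw => -[].
  have -> : G2 a b c d w = - u.2 by move: e; rewrite /Gw => -[].
  nra.
exists u => w; apply/negP => /eqP e.
have := hs w; rewrite -phi.
have -> : G1 a b c d w = u.1 by rewrite -e.
have -> : G2 a b c d w = u.2 by rewrite -e.
nra.
Qed.

Lemma nosol : DL <= 0 -> exists v, forall w, Gw w != v.
Proof.
rewrite le_eqVlt => /orP [/eqP h|h]; first exact: nosol_Dl0.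
have [w hw] := Qpos h.
exists (w.2, - w.1); apply: nosol_dk.
by rewrite I2 /= opprK -surjective_pairing; nra.
Qed.


Local Notation PS := (Psi a b c d).

Lemma mky_reg v : (forall w, Gw w != v) -> regular_value PS (vec4 0 0 (- v.1) (- v.2)).
Proof.
move=> h; apply/regular_iff => w; rewrite mky_vv => e.
by move: (h w); rewrite e eqxx.
Qed.

Lemma hm_sol y n : has_multiplicity PS y n -> (0 < n)%N -> exists w, Gw w = vv y.
Proof.
case=> s [us <- hs]; case: s us hs => // x s _ hs _.
have : PS x = y by apply/hs; rewrite inE eqxx.
by case/Psi_pre => w [_ e]; exists w.
Qed.

Lemma RC y w0 : regular_value PS y -> Gw w0 = vv y ->
  exists s : seq (R * R), exists lam lam' : R,
  [/\ uniq s, lam * lam' = - 3%:R * DL * ((vv y).1 ^+ 2 + (vv y).2 ^+ 2) ^+ 2, (0 < size s)%N,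
     size s = ((if (0 < lam)%R then 2 else 0) + (if (0 < lam')%R then 2 else 0))%N &
     forall w, Gw w = vv y <-> w \in s].
Proof.
move=> /regular_iff hr e.
have q0 := hr w0 e.
have hd : 0 < dkv (vv y).
  by rewrite -e /Gw I3 mulr_gt0 // exprn_even_gt0.
have [s [lam [lam' [us hp hs hm]]]] := MC hd.
exists s, lam, lam'; split => //.
have : w0 \in s by apply/hm.
by case: (s) => //.
Qed.

Lemma N2pos y w0 : regular_value PS y -> Gw w0 = vv y ->
  0 < ((vv y).1 ^+ 2 + (vv y).2 ^+ 2) ^+ 2.
Proof.
move=> /regular_iff hr e; have q0 := hr w0 e.
have hd : 0 < dkv (vv y) by rewrite -e /Gw I3 mulr_gt0 // exprn_even_gt0.
by have hN := N_pos hd; apply: exprn_gt0.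
Qed.

Lemma B1 : 0 < DL -> forall y, regular_value PS y -> has_multiplicity PS y 2.
Proof.
move=> hD y hr.
have v0 : ((vv y).1 != 0) || ((vv y).2 != 0).
  rewrite -negb_and; apply/negP => /andP [/eqP h1 /eqP h2].
  move/regular_iff: hr => /(_ (0, 0)); rewrite Gw0 [vv y]surjective_pairing h1 h2.
  by rewrite /Qf /= expr0n /= !mulr0 !addr0 eqxx => /(_ erefl).
have hd : 0 < dkv (vv y).
  rewrite I2; have := @Qneg hD (- (vv y).2, (vv y).1).
  rewrite /= oppr_eq0 orbC v0 => /(_ erefl); nra.
have [s [lam [lam' [us hp hs hm]]]] := MC hd.
have N0 := N_pos hd.
have h2 : size s = 2%N.
  apply: (size_neg _ hs); rewrite hp.
  have : 0 < ((vv y).1 ^+ 2 + (vv y).2 ^+ 2) ^+ 2 by apply: exprn_gt0.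
  nra.
by have [hm' _] := transfer us hm; rewrite -h2.
Qed.

Lemma B2 : (forall y, regular_value PS y -> has_multiplicity PS y 2) -> 0 < DL.
Proof.
move=> h; rewrite ltNge; apply/negP => hD.
have [v hv] := nosol hD.
have [w e] := hm_sol (h _ (mky_reg hv)) (isT : (0 < 2)%N).
by move: (hv w); rewrite e mky_vv eqxx.
Qed.


Lemma D1 : DL < 0 -> regular_multiplicities PS = [set 0%N; 4%N].
Proof.
move=> hD; apply/seteqP; split => n.
  case=> y [hr hmult].
  have [[w0 e]|nos] := pselect (exists w, Gw w = vv y).
    have [s [lam [lam' [us hp hs0 hs hm]]]] := RC hr e.
    have [_ hn] := transfer us hm.
    rewrite (hn _ hmult); right.
    apply: (size_pos _ hs0 hs); rewrite hp.
    have := N2pos hr e; nra.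
  left; case: n hmult => // n hmult.
  by have [w e] := hm_sol hmult (isT : (0 < n.+1)%N); case: nos; exists w.
case=> ->.
  have [v hv] := nosol (ltW hD).
  exists (vec4 0 0 (- v.1) (- v.2)); split; first exact: mky_reg.
  exists [::]; split => // x; split => // /Psi_pre [w [_ e]].
  by move: (hv w); rewrite e mky_vv eqxx.
have [w0 hw0] := Qpos hD.
set y := vec4 0 0 (- (Gw w0).1) (- (Gw w0).2).
have e : Gw w0 = vv y by rewrite mky_vv.
have hr : regular_value PS y.
  apply/regular_iff => w ew.
  have h : 4%:R * Q w ^+ 2 = 4%:R * Q w0 ^+ 2.
    by rewrite -!I3 -/(Gw w) -/(Gw w0) ew -e.
  apply/negP => /eqP q0; move: h; rewrite q0 expr0n /= mulr0 => h.
  have : 0 < Q w0 ^+ 2 by apply: exprn_gt0.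
  lra.
have [s [lam [lam' [us hp hs0 hs hm]]]] := RC hr e.
have [hm1 _] := transfer us hm.
have h4 : size s = 4%N.
  apply: (size_pos _ hs0 hs); rewrite hp.
  have := N2pos hr e; nra.
by exists y; split => //; rewrite -h4.
Qed.

Lemma D2 : regular_multiplicities PS = [set 0%N; 4%N] -> DL < 0.
Proof.
move=> E; rewrite ltNge; apply/negP => hD.
have : regular_multiplicities PS 4%N by rewrite E; right.
case=> y [hr hmult].
have [w0 e] := hm_sol hmult (isT : (0 < 4)%N).
have [s [lam [lam' [us hp hs0 hs hm]]]] := RC hr e.
have [_ hn] := transfer us hm.
have hle : lam * lam' <= 0 by rewrite hp; have := N2pos hr e; nra.
by have := size_le hle hs; rewrite -(hn _ hmult).
Qed.

Lemma A1 : 0 < DL <-> critical_set PS = zero_section (R := R).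
Proof.
rewrite -Qdef; split.
  move=> h; apply/seteqP; split => x /=.
    move/crit_iff => /h [e2 e3]; by rewrite /zero_section /= e2 e3.
  case=> e2 e3; apply/crit_iff; rewrite e2 e3 /Qf /=; ring.
move=> E w q.
set x := vec4 0 0 w.1 w.2.
have hc : critical_point PS x by apply/crit_iff; rewrite /x !mxE /= -surjective_pairing.
have := congr1 (fun S => S x) E; rewrite /critical_set /zero_section /= => H.
have : (x 0 i2 = 0 /\ x 0 i3 = 0) by rewrite -H.
by rewrite /x !mxE /= => -[e2 e3]; rewrite [w]surjective_pairing e2 e3.
Qed.

Lemma C1 : PS @` zero_section (R := R) = lagL a b c d.
Proof.
apply/seteqP; split.
  move=> _ [x [h2 h3] <-].
  exists (x 0 i0) => //; exists (x 0 i1) => //.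
  rewrite /Psi h2 h3; apply/vec4_eq; split; ring.
move=> _ [q1 _ [q2 _ <-]].
exists (vec4 q1 q2 0 0); first by rewrite /zero_section /= !mxE.
rewrite /Psi !mxE /=; apply/vec4_eq; split; ring.
Qed.

End PsiSec.

Theorem mainTheorem4 (R : realType) (a b c d : R) :
  let lhs := 18%:R * a * b * c * d + b ^+ 2 * c ^+ 2 in
  let rhs := 4%:R * a * c ^+ 3 + 4%:R * b ^+ 3 * d + 27%:R * a ^+ 2 * d ^+ 2 in
  let Delta := critical_set (Psi a b c d) in
  let Sigma := Psi a b c d @` Delta in
  [/\ (rhs < lhs <-> Delta = @zero_section R),
      (Delta = @zero_section R <->
         forall y, regular_value (Psi a b c d) y -> has_multiplicity (Psi a b c d) y 2),
      (Delta = @zero_section R -> Sigma = lagL a b c d),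
      (lhs < rhs <-> regular_multiplicities (Psi a b c d) = [set 0%N; 4%N])
    & (lhs < rhs -> Delta <> @zero_section R)].
Proof.
move=> lhs rhs Delta Sigma.
have hD : (rhs < lhs) <-> 0 < Dl a b c d by rewrite /Dl subr_gt0.
have hD' : (lhs < rhs) <-> Dl a b c d < 0 by rewrite /Dl subr_lt0.
split.
- by rewrite hD; exact: A1.
- split.
    by move=> E; apply: B1; apply/A1; exact: E.
  by move=> h; apply/A1; exact: B2.
- by move=> E; rewrite /Sigma E; exact: C1.
- by rewrite hD'; split; [exact: D1 | exact: D2].
- move=> /hD' h E.
  have := proj2 (A1 a b c d) E.
  by rewrite ltNge (ltW h).
Qed.
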